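(* Let $\mathcal{V}$ and $\mathcal{W}$ be quaternionic two-sided Banach algebras with unit $1\neq 0$, let $\mathcal{A}:\mathcal{V}\to\mathcal{W}$ be a homomorphism, and let $a\in\mathcal{V}^{-1}$. Then $$\sigma_{S,\mathcal{A}}^{\Phi}(a^{-1})=\left\{\frac{\overline{q}}{|q|^{2}}:\ q\in \sigma_{S,\mathcal{A}}^{\Phi}(a)\right\}\quad\text{and}\quad \sigma_{S,\mathcal{A}}^{\Phi^{0}}(a^{-1})=\left\{\frac{\overline{q}}{|q|^{2}}:\ q\in \sigma_{S,\mathcal{A}}^{\Phi^{0}}(a)\right\}.$$
   Context: $\mathbb{H}$ denotes the quaternions; $\overline{q}$ is the quaternionic conjugate, $Re(q)$ the real part, $|q|$ the norm. A quaternionic two-sided Banach algebra with unit is a two-sided $\mathbb{H}$-vector space $\mathcal{V}$ with an associative product satisfying $x(y+z)=xy+xz$, $(x+y)z=xz+yz$, $q(xy)=(qx)y$, $(xy)q=x(yq)$, complete with respect to a norm with $\|qx\|=|q|\|x\|=\|xq\|$, $\|xy\|\le\|x\|\|y\|$, and with unit $1_{\mathcal{V}}$, $\|1_{\mathcal{V}}\|=1$. A homomorphism $\mathcal{A}:\mathcal{V}\to\mathcal{W}$ is additive, multiplicative, satisfies $\mathcal{A}(qu)=q\mathcal{A}(u)$, $\mathcal{A}(uq)=\mathcal{A}(u)q$ and $\mathcal{A}(1_{\mathcal{V}})=1_{\mathcal{W}}$. $\mathcal{V}^{-1}$ is the group of invertible elements. For $v\in\mathcal{V}$, $q\in\mathbb{H}$,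 $R_q(v)=v^2-2Re(q)v+|q|^21_{\mathcal{V}}$. $\Phi_{\mathcal{A}}=\{v:\mathcal{A}(v)\in\mathcal{W}^{-1}\}$, $\Phi^0_{\mathcal{A}}=\mathcal{V}^{-1}+\mathcal{A}^{-1}(0)$, $\sigma_{S,\mathcal{A}}^{\Phi}(v)=\{q\in\mathbb{H}:R_q(v)\notin\Phi_{\mathcal{A}}\}$, $\sigma_{S,\mathcal{A}}^{\Phi^0}(v)=\{q\in\mathbb{H}:R_q(v)\notin\Phi^0_{\mathcal{A}}\}$. *)

(* Defs.v *)
From HB Require Import structures.
From mathcomp Require Import all_boot all_order all_algebra.
From mathcomp Require Import reals.
Set Implicit Arguments. Unset Strict Implicit. Unset Printing Implicit Defensive.
Import Order.TTheory GRing.Theory Num.Theory.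
Local Open Scope ring_scope.

Record quat (R : realType) := Quat { qr : R; qi : R; qj : R; qk : R }.

Section Quat.
Variable R : realType.
Definition qadd (p q : quat R) : quat R :=
  Quat (qr p + qr q) (qi p + qi q) (qj p + qj q) (qk p + qk q).
Definition qmul (p q : quat R) : quat R :=
  Quat (qr p * qr q - qi p * qi q - qj p * qj q - qk p * qk q)
       (qr p * qi q + qi p * qr q + qj p * qk q - qk p * qj q)
       (qr p * qj q - qi p * qk q + qj p * qr q + qk p * qi q)
       (qr p * qk q + qi p * qj q - qj p * qi q + qk p * qr q).
Definition qreal (r : R) : quat R := Quat r 0 0 0.
Definition qone : quat R := qreal 1.
Definition qconj (q : quat R) : quat R := Quat (qr q) (- qi q) (- qj q) (- qk q).
Definition qRe (q : quat R) : R := qr q.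
Definition qnorm (q : quat R) : R :=
  Num.sqrt (qr q ^+ 2 + qi q ^+ 2 + qj q ^+ 2 + qk q ^+ 2).
Definition qinvpt (q : quat R) : quat R := qmul (qreal ((qnorm q ^+ 2)^-1)) (qconj q).
End Quat.

Record QBanachAlg (R : realType) := {
  car :> Type;
  vzero : car;
  vadd : car -> car -> car;
  vopp : car -> car;
  vmul : car -> car -> car;
  vone : car;
  lsc : quat R -> car -> car;
  rsc : car -> quat R -> car;
  vnorm : car -> R;
  vaddA : forall x y z, vadd x (vadd y z) = vadd (vadd x y) z;
  vaddC : forall x y, vadd x y = vadd y x;
  vadd0 : forall x, vadd x vzero = x;
  vaddN : forall x, vadd x (vopp x) = vzero;
  lscDr : forall q x y, lsc q (vadd x y) = vadd (lsc q x) (lsc q y);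
  lscDl : forall p q x, lsc (qadd p q) x = vadd (lsc p x) (lsc q x);
  lscA : forall p q x, lsc (qmul p q) x = lsc p (lsc q x);
  lsc1 : forall x, lsc (qone R) x = x;
  rscDl : forall q x y, rsc (vadd x y) q = vadd (rsc x q) (rsc y q);
  rscDr : forall p q x, rsc x (qadd p q) = vadd (rsc x p) (rsc x q);
  rscA : forall p q x, rsc x (qmul p q) = rsc (rsc x p) q;
  rsc1 : forall x, rsc x (qone R) = x;
  lrscA : forall p q x, rsc (lsc p x) q = lsc p (rsc x q);
  vmulA : forall x y z, vmul x (vmul y z) = vmul (vmul x y) z;
  vmulDr : forall x y z, vmul x (vadd y z) = vadd (vmul x y) (vmul x z);
  vmulDl : forall x y z, vmul (vadd x y) z = vadd (vmul x z) (vmul y z);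
  lscM : forall q x y, lsc q (vmul x y) = vmul (lsc q x) y;
  rscM : forall q x y, rsc (vmul x y) q = vmul x (rsc y q);
  vmul1l : forall x, vmul vone x = x;
  vmul1r : forall x, vmul x vone = x;
  vnorm_ge0 : forall x, 0 <= vnorm x;
  vnorm_eq0 : forall x, vnorm x = 0 -> x = vzero;
  vnormD : forall x y, vnorm (vadd x y) <= vnorm x + vnorm y;
  vnormZl : forall q x, vnorm (lsc q x) = qnorm q * vnorm x;
  vnormZr : forall q x, vnorm (rsc x q) = qnorm q * vnorm x;
  vnormM : forall x y, vnorm (vmul x y) <= vnorm x * vnorm y;
  vnorm1 : vnorm vone = 1;
  vcomplete : forall u : nat -> car,
    (forall e : R, 0 < e -> exists N, forall m n, (N <= m)%N -> (N <= n)%N ->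
        vnorm (vadd (u m) (vopp (u n))) < e) ->
    exists l, forall e : R, 0 < e -> exists N, forall n, (N <= n)%N ->
        vnorm (vadd (u n) (vopp l)) < e
}.

Arguments vzero {R} _.
Arguments vone {R} _.

Section Defs.
Variable R : realType.

Definition vsub (V : QBanachAlg R) (x y : V) : V := vadd x (vopp y).

Definition invertible (V : QBanachAlg R) (x : V) : Prop :=
  exists y : V, vmul x y = vone V /\ vmul y x = vone V.

Definition is_hom (V W : QBanachAlg R) (A : V -> W) : Prop :=
  (forall x y, A (vadd x y) = vadd (A x) (A y)) /\
  (forall x y, A (vmul x y) = vmul (A x) (A y)) /\
  (forall q x, A (lsc q x) = lsc q (A x)) /\
  (forall q x, A (rsc x q) = rsc (A x) q) /\
  A (vone V) = vone W.

Definition Rq (V : QBanachAlg R) (q : quat R) (v : V) : V :=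
  vadd (vsub (vmul v v) (lsc (qreal (2 * qRe q)) v))
       (lsc (qreal (qnorm q ^+ 2)) (vone V)).

Definition PhiA (V W : QBanachAlg R) (A : V -> W) (v : V) : Prop :=
  invertible (A v).

Definition Phi0A (V W : QBanachAlg R) (A : V -> W) (v : V) : Prop :=
  exists u w : V, invertible u /\ A w = vzero W /\ v = vadd u w.

Definition SspecPhi (V W : QBanachAlg R) (A : V -> W) (v : V) (q : quat R) : Prop :=
  ~ PhiA A (Rq q v).

Definition SspecPhi0 (V W : QBanachAlg R) (A : V -> W) (v : V) (q : quat R) : Prop :=
  ~ Phi0A A (Rq q v).
End Defs.

(* Main.v *)
Require Import Defs.
From mathcomp Require Import all_boot all_order all_algebra reals ring lra.
Import Order.TTheory GRing.Theory Num.Theory.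
Local Open Scope ring_scope.

Definition qS {R : realType} (q : quat R) : R :=
  qr q ^+ 2 + qi q ^+ 2 + qj q ^+ 2 + qk q ^+ 2.

Lemma qS_ge0 {R : realType} (q : quat R) : 0 <= qS q.
Proof. rewrite /qS; have := sqr_ge0 (qr q); have := sqr_ge0 (qi q);
  have := sqr_ge0 (qj q); have := sqr_ge0 (qk q); lra. Qed.

Lemma qnorm2 {R : realType} (q : quat R) : qnorm q ^+ 2 = qS q.
Proof. by rewrite /qnorm sqr_sqrtr // qS_ge0. Qed.

Lemma qS0_re {R : realType} (q : quat R) : qS q = 0 -> qr q = 0.
Proof.
move=> h. have h2 : qr q ^+ 2 = 0.
  move: h; rewrite /qS; have := sqr_ge0 (qr q); have := sqr_ge0 (qi q);
  have := sqr_ge0 (qj q); have := sqr_ge0 (qk q); lra.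
by move/eqP: h2; rewrite expf_eq0 /= => /eqP.
Qed.

Lemma qS_inv {R : realType} (q : quat R) : qS q != 0 -> qS (qinvpt q) = (qS q)^-1.
Proof.
move=> h; rewrite /qinvpt qnorm2; case: q h => x y z w; rewrite /qS /= => h.
field. exact: h.
Qed.

Lemma qinvptK {R : realType} (q : quat R) : qS q != 0 -> qinvpt (qinvpt q) = q.
Proof.
move=> h; rewrite {1}/qinvpt qnorm2 qS_inv // invrK.
move: h; case: q => x y z w; rewrite /qinvpt qnorm2 /qS /= => h.
by congr Quat; rewrite /=; field.
Qed.

Lemma qS_invpt_neq0 {R : realType} (q : quat R) : qS q != 0 -> qS (qinvpt q) != 0.
Proof. by move=> h; rewrite qS_inv // invr_eq0. Qed.

Lemma qRe_invpt {R : realType} (q : quat R) :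
  2 * qRe (qinvpt q) = (qS q)^-1 * (2 * qRe q).
Proof. rewrite /qinvpt qnorm2 /qRe /=; ring. Qed.

Lemma qaddR {R : realType} (r s : R) : qadd (qreal r) (qreal s) = qreal (r + s).
Proof. by rewrite /qadd /qreal /=; congr Quat; ring. Qed.

Lemma qmulR {R : realType} (r s : R) : qmul (qreal r) (qreal s) = qreal (r * s).
Proof. by rewrite /qmul /qreal /=; congr Quat; ring. Qed.

Section G.
Context {R : realType} {V : QBanachAlg R}.
Implicit Types x y z : V.

Lemma add0l x : vadd (vzero V) x = x.
Proof. by rewrite vaddC vadd0. Qed.

Lemma addI x y z : vadd x y = vadd x z -> y = z.
Proof.
move=> h; have : vadd (vopp x) (vadd x y) = vadd (vopp x) (vadd x z) by rewrite h.
by rewrite !vaddA [vadd (vopp x) x]vaddC vaddN !add0l.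
Qed.

Lemma addI0 x y : vadd x y = x -> y = vzero V.
Proof. by move=> h; apply: (addI x); rewrite h vadd0. Qed.

Lemma oppE x y : vadd x y = vzero V -> y = vopp x.
Proof. by move=> h; apply: (addI x); rewrite h vaddN. Qed.

Lemma mul0r x : vmul x (vzero V) = vzero V.
Proof. by apply: (addI0 (vmul x (vzero V))); rewrite -vmulDr vadd0. Qed.

Lemma mul0l x : vmul (vzero V) x = vzero V.
Proof. by apply: (addI0 (vmul (vzero V) x)); rewrite -vmulDl vadd0. Qed.

Lemma mulNl x y : vmul (vopp x) y = vopp (vmul x y).
Proof. by apply: oppE; rewrite -vmulDl vaddN mul0l. Qed.

Lemma lscv0 q : lsc q (vzero V) = vzero V.
Proof. by apply: (addI0 (lsc q (vzero V))); rewrite -lscDr vadd0. Qed.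

Lemma lscN q x : lsc q (vopp x) = vopp (lsc q x).
Proof. by apply: oppE; rewrite -lscDr vaddN lscv0. Qed.

Lemma lsc0 x : lsc (qreal 0) x = vzero V.
Proof.
apply: (addI0 (lsc (qreal 0) x)); rewrite -lscDl qaddR addr0 //.
Qed.

Lemma opp0 : vopp (vzero V) = vzero V.
Proof. by symmetry; apply: oppE; rewrite vadd0. Qed.

Lemma lscE q x : lsc q x = vmul (lsc q (vone V)) x.
Proof. by rewrite -lscM vmul1l. Qed.


Lemma key (a b : V) (q : quat R) : vmul a b = vone V -> qS q != 0 ->
  Rq (qinvpt q) b = lsc (qreal (qS q)^-1) (vmul (vmul (Rq q a) b) b).
Proof.
move=> hab hq.
set s := qreal (2 * qRe q); set n := qreal (qnorm q ^+ 2).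
have E1 : vmul (Rq q a) b = vadd (vadd a (vopp (lsc s (vone V)))) (lsc n b).
  by rewrite /Rq /vsub -/s -/n !vmulDl mulNl -vmulA hab vmul1r -!lscM hab vmul1l.
have E2 : vmul (vadd (vadd a (vopp (lsc s (vone V)))) (lsc n b)) b
    = vadd (vadd (vone V) (vopp (lsc s b))) (lsc n (vmul b b)).
  by rewrite !vmulDl mulNl -!lscM hab vmul1l.
rewrite E1 E2 !lscDr lscN /s /n -!lscA !qmulR qnorm2 mulVf //.
change (qreal 1) with (qone R); rewrite lsc1 -qRe_invpt.
rewrite /Rq /vsub qnorm2 qS_inv //.
set X := vmul b b; set Y := vopp _; set Z := lsc _ _.
by rewrite [vadd (vadd Z Y) X]vaddC [vadd Z Y]vaddC vaddA.
Qed.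

Lemma inv_mul (x y : V) : invertible x -> invertible y -> invertible (vmul x y).
Proof.
move=> [x' [h1 h2]] [y' [h3 h4]]; exists (vmul y' x'); split.
  by rewrite -vmulA [vmul y (vmul y' x')]vmulA h3 vmul1l h1.
by rewrite -vmulA [vmul x' (vmul x y)]vmulA h2 vmul1l h4.
Qed.

Lemma inv_scal (r : R) : r != 0 -> invertible (lsc (qreal r) (vone V)).
Proof.
move=> hr; exists (lsc (qreal r^-1) (vone V)); split;
  rewrite -lscM vmul1l -lscA qmulR ?mulfV ?mulVf //;
  change (qreal 1) with (qone R); by rewrite lsc1.
Qed.

Lemma iff_mul (P : V -> Prop)
  (HP : forall x y z, invertible y -> invertible z -> P x -> P (vmul (vmul y x) z))
  (x y z : V) : invertible y -> invertible z -> P x <-> P (vmul (vmul y x) z).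
Proof.
move=> hy hz; split; first exact: HP.
case: (hy) => y' [hy1 hy2]; case: (hz) => z' [hz1 hz2] h.
have hy' : invertible y' by exists y.
have hz' : invertible z' by exists z.
have := HP _ _ _ hy' hz' h.
by rewrite !vmulA hy2 vmul1l -vmulA hz1 vmul1r.
Qed.

Lemma Rq0 (x : V) (q : quat R) : qS q = 0 -> Rq q x = vmul x x.
Proof.
move=> h; rewrite /Rq /vsub qnorm2 h /qRe (qS0_re q h) mulr0 !lsc0 opp0.
by rewrite !vadd0.
Qed.

Lemma transfer (P : V -> Prop)
  (HP : forall x y z, invertible y -> invertible z -> P x -> P (vmul (vmul y x) z))
  (a b : V) (q : quat R) : vmul a b = vone V -> vmul b a = vone V -> qS q != 0 ->
  P (Rq q a) <-> P (Rq (qinvpt q) b).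
Proof.
move=> hab hba hq; rewrite (key _ _ _ hab hq) lscE.
rewrite -[vmul (vmul (Rq q a) b) b]vmulA vmulA.
apply: iff_mul => //; first by apply: inv_scal; rewrite invr_eq0.
by apply: inv_mul; exists a.
Qed.

Lemma main_gen (P : V -> Prop)
  (HP : forall x y z, invertible y -> invertible z -> P x -> P (vmul (vmul y x) z))
  (P1 : P (vone V)) (a b : V) (hab : vmul a b = vone V) (hba : vmul b a = vone V) :
  forall p, ~ P (Rq p b) <-> exists q, ~ P (Rq q a) /\ p = qinvpt q.
Proof.
have sq : forall x : V, invertible x -> P (vmul x x).
  move=> x hx; have := HP _ _ _ hx hx P1; by rewrite vmul1r.
move=> p; split.
  move=> hp.
  have Sp : qS p != 0.
    apply/eqP => S0; apply: hp; rewrite Rq0 //; apply: sq; by exists a.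
  exists (qinvpt p); split; last by rewrite qinvptK.
  by rewrite -(transfer _ HP _ _ _ hba hab Sp).
case=> q [hq ->].
have Sq : qS q != 0.
  apply/eqP => S0; apply: hq; rewrite Rq0 //; apply: sq; by exists b.
by rewrite -(transfer _ HP _ _ _ hab hba Sq).
Qed.

End G.

Lemma hom0 {R : realType} {V W : QBanachAlg R} (A : V -> W) :
  is_hom A -> A (vzero V) = vzero W.
Proof.
move=> [hD _]; apply: (addI0 (A (vzero V))); by rewrite -hD vadd0.
Qed.

Lemma hom_inv {R : realType} {V W : QBanachAlg R} (A : V -> W) (x : V) :
  is_hom A -> invertible x -> invertible (A x).
Proof.
move=> [_ [hM [_ [_ h1]]]] [y [e1 e2]]; exists (A y).
by rewrite -!hM e1 e2 h1.
Qed.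

Theorem mainTheorem2 (R : realType) (V W : QBanachAlg R)
  (HV : vone V <> vzero V) (HW : vone W <> vzero W)
  (A : V -> W) (HA : is_hom A)
  (a ainv : V) (Ha : vmul a ainv = vone V /\ vmul ainv a = vone V) :
  (forall p : quat R,
      SspecPhi A ainv p <-> exists q, SspecPhi A a q /\ p = qinvpt q) /\
  (forall p : quat R,
      SspecPhi0 A ainv p <-> exists q, SspecPhi0 A a q /\ p = qinvpt q).
Proof.
case: Ha => hab hba.
have HM := HA; case: HM => [hD [hM _]].
split.
  apply: (@main_gen R V (PhiA A)) => //.
    move=> x y z hy hz; rewrite /PhiA !hM => hx.
    by apply: inv_mul; [apply: inv_mul => // |]; apply: hom_inv.
  rewrite /PhiA; case: HA => [_ [_ [_ [_ ->]]]]; exists (vone W).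
  by rewrite vmul1l.
apply: (@main_gen R V (Phi0A A)) => //.
  move=> x y z hy hz [u [w [hu [hw ->]]]].
  exists (vmul (vmul y u) z), (vmul (vmul y w) z); split.
    by apply: inv_mul => //; apply: inv_mul.
  split; first by rewrite !hM hw mul0r mul0l.
  by rewrite vmulDr vmulDl.
exists (vone V), (vzero V); split; first by exists (vone V); rewrite vmul1l.
by rewrite hom0 // vadd0.
Qed.
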